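(* Let $\alpha,\beta\in\{-1,0,1\}$, and let $\tilde{C}\in\{0,1\}^{\tilde{K}\times n}$ and $\hat{C}\in\{0,1\}^{\hat{K}\times n}$ be cost matrices of two ordinal objectives on the same $n$ elements. Then the matrix \[ A=\begin{pmatrix}\alpha\,\tilde{C} & I_{\tilde{K}} & 0\\ \beta\,\hat{C} & 0 & I_{\hat{K}}\end{pmatrix} \] (the constraint matrix, in standard form with slack variables, of the system $\alpha\tilde{C}x\le \tilde{b}$, $\beta\hat{C}x\le\hat{b}$) is totally unimodular, where $I_m$ denotes the $m\times m$ identity matrix.
   Context: An ordinal objective on $n$ elements with $K$ categories $\eta_1\prec\dots\prec\eta_K$ is given by an assignment $o:\{1,\dots,n\}\to\{\eta_1,\dots,\eta_K\}$; its cost matrix $C\in\{0,1\}^{K\times n}$ has $C_{ji}=1$ if $j\le k$ where $o(i)=\eta_k$, and $C_{ji}=0$ otherwise. $\tilde{C}$ and $\hat{C}$ are such matrices for assignments $\tilde{o}$ (with $\tilde{K}$ categories) and $\hat{o}$ (with $\hat{K}$ categories). A matrix is totally unimodular if every square submatrix has determinant in $\{-1,0,1\}$. *)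

(* Defs.v *)
From mathcomp Require Import all_boot all_order all_algebra.
Set Implicit Arguments. Unset Strict Implicit. Unset Printing Implicit Defensive.
Import GRing.Theory.
Local Open Scope ring_scope.

(* Categories eta_1 < ... < eta_K are represented by 'I_K (eta_{k+1} <-> k).
   An ordinal objective is an assignment o : 'I_n -> 'I_K.
   Cost matrix: C j i = 1 iff j <= o i (0-based, same as 1-based j <= k). *)
Definition cost_matrix (K n : nat) (o : 'I_n -> 'I_K) : 'M[int]_(K, n) :=
  \matrix_(j < K, i < n) (if (j <= o i)%N then 1 else 0).

Definition totally_unimodular (m p : nat) (A : 'M[int]_(m, p)) : Prop :=
  forall (k : nat) (f : 'I_k -> 'I_m) (g : 'I_k -> 'I_p),
    injective f -> injective g ->
    let d := \det (mxsub f g A) in d = 0 \/ d = 1 \/ d = -1.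

Definition in_m101 (a : int) : Prop := a = -1 \/ a = 0 \/ a = 1.

Definition ordinal_system_matrix (n Kt Kh : nat) (alpha beta : int)
  (Ct : 'M[int]_(Kt, n)) (Ch : 'M[int]_(Kh, n)) : 'M[int]_(Kt + Kh, n + (Kt + Kh)) :=
  col_mx (row_mx (alpha *: Ct) (row_mx 1%:M 0))
         (row_mx (beta *: Ch) (row_mx 0 1%:M)).

(* Main.v *)
Require Import Defs.
From mathcomp Require Import all_boot all_order all_algebra.
From mathcomp Require Import zify.
From Stdlib Require Import Classical.
Import GRing.Theory.
Local Open Scope ring_scope.

Lemma m101M a b : in_m101 a -> in_m101 b -> in_m101 (a * b).
Proof. by move=> [->|[->|->]] [->|[->|->]]; rewrite /in_m101; auto. Qed.

Lemma m101S (e : nat) : in_m101 ((-1) ^+ e).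
Proof. rewrite -signr_odd; case: (odd e); rewrite /in_m101 /=; auto. Qed.

Lemma sum_delta k (F : 'I_k -> int) c : \sum_i F i * (i == c)%:R = F c.
Proof.
rewrite (bigD1 c) //= eqxx mulr1 big1 ?addr0 // => i /negbTE ->; by rewrite mulr0.
Qed.

Lemma diff_ind (l1 h1 l2 h2 p p0 : nat) : (l1 <= p0)%N -> (p0 <= p)%N -> (l2 <= p0)%N ->
  (h2 <= h1)%N -> (p0 <= h2)%N ->
  ((l1 <= p) && (p <= h1))%N%:R - ((l2 <= p) && (p <= h2))%N%:R
     = ((h2.+1 <= p) && (p <= h1))%N%:R :> int.
Proof.
move=> *.
have -> : (l1 <= p)%N = true by apply/idP; lia.
have -> : (l2 <= p)%N = true by apply/idP; lia.
case: (ltnP h2 p) => H /=; first by rewrite subr0.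
have -> : (p <= h1)%N = true by apply/idP; lia.
by rewrite subrr.
Qed.
Definition colE {k} (M : 'M[int]_k) c :=
  exists p : pred 'I_k, (forall r, M r c = (p r)%:R) /\ (forall r r', p r -> p r' -> r = r').

Lemma key k : forall (M : 'M[int]_k) (pos : 'I_k -> nat) (w : 'I_k -> int) (lo hi : 'I_k -> nat),
  (forall r, in_m101 (w r)) ->
  (forall c, colE M c \/ (forall r, M r c = w r * ((lo c <= pos r) && (pos r <= hi c))%N%:R)) ->
  in_m101 (\det M).
Proof.
elim: k => [|k IH] M pos w lo hi Hw HM.
  by rewrite det_mx00; right; right.
case: (classic (exists c, colE M c)) => [[c [p [Hp Hinj]]]|Hno].
  rewrite (expand_det_col M c).
  case: (pickP p) => [r0 Pr0|Hnone]; last first.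
    by rewrite big1 => [|i _]; [right; left | rewrite Hp Hnone mul0r].
  rewrite (bigD1 r0) //= big1 ?addr0; last first.
    move=> i Hi; rewrite Hp; case Pi: (p i); last by rewrite mul0r.
    by rewrite (Hinj _ _ Pi Pr0) eqxx in Hi.
  rewrite Hp Pr0 mul1r /cofactor; apply: m101M; first exact: m101S.
  apply: (IH _ (pos \o lift r0) (w \o lift r0) (lo \o lift c) (hi \o lift c)) => [r|c'].
    exact: Hw.
  case: (HM (lift c c')) => [[q [Hq Hqi]]|Hc].
    left; exists (q \o lift r0); split => [r|r r' /= Hr Hr'].
      by rewrite !mxE Hq.
    exact: lift_inj (Hqi _ _ Hr Hr').
  by right => r; rewrite !mxE Hc.
have HI : forall c r, M r c = w r * ((lo c <= pos r) && (pos r <= hi c))%N%:R.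
  move=> c; case: (HM c) => // HE; case: Hno; by exists c.
have [r0 _ Hmin] := @arg_minnP _ ord0 xpredT pos isT.
pose S c := ((lo c <= pos r0) && (pos r0 <= hi c))%N.
case: (pickP S) => [c1 Sc1|Hnone]; last first.
  rewrite (expand_det_row _ r0) big1 => [|c _]; first by right; left.
  by rewrite HI; move: (Hnone c); rewrite /S => ->; rewrite mulr0 mul0r.
have [j0 Sj0 Hj0] := @arg_minnP _ c1 S hi Sc1.
pose U : 'M[int]_k.+1 := \matrix_(i, j) ((i == j)%:R - ((i == j0) && S j && (j != j0))%:R).
have detU : \det U = 1.
  rewrite (expand_det_col U j0) (bigD1 j0) //= big1 ?addr0; last first.
    move=> i /negbTE Hi; by rewrite !mxE Hi /= subr0 mul0r.
  rewrite !mxE eqxx /= andbF subr0 mul1r /cofactor.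
  have -> : row' j0 (col' j0 U) = (1%:M : 'M_k).
    apply/matrixP => a b; rewrite !mxE (inj_eq lift_inj).
    by rewrite [lift _ _ == _]eq_sym (negbTE (neq_lift _ _)) /= subr0.
  by rewrite det1 mulr1 addnn -signr_odd odd_double.
have MU : forall r c, (M *m U) r c = M r c - (S c && (c != j0))%:R * M r j0.
  move=> r c; rewrite mxE.
  under eq_bigr do rewrite mxE mulrBr.
  rewrite sumrB sum_delta; congr (_ - _).
  rewrite (bigD1 j0) //= eqxx /= big1 ?addr0; first by rewrite mulrC.
  by move=> i /negbTE ->; rewrite mulr0.
rewrite -(mulr1 (\det M)) -detU -det_mulmx.
rewrite (expand_det_row _ r0) (bigD1 j0) //= big1 ?addr0; last first.
  move=> c Hc; rewrite MU Hc andbT !HI.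
  rewrite /S in Sj0; rewrite Sj0.
  case Sc: (S c); move: Sc; rewrite /S => ->; by rewrite /= ?mul1r ?mul0r ?mulr0 ?subrr ?subr0 ?mul0r.
rewrite MU eqxx andbF /= mul0r subr0 HI; move: (Sj0); rewrite /S => ->; rewrite mulr1 /cofactor.
apply: m101M; first exact: Hw.
apply: m101M; first exact: m101S.
pose lo' c' := if S (lift j0 c') then (hi j0).+1 else lo (lift j0 c').
apply: (IH _ (pos \o lift r0) (w \o lift r0) lo' (hi \o lift j0)) => [r|c'].
  exact: Hw.
right => r; rewrite [LHS]mxE [LHS]mxE MU [lift _ _ == _]eq_sym (negbTE (neq_lift _ _)) andbT /lo' /=.
case Sc: (S (lift j0 c')); last by rewrite mul0r subr0 HI.
rewrite !HI mul1r -mulrBr; congr (_ * _).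
move: Sc Sj0; rewrite /S => /andP [H1 H2] /andP [H3 H4].
have H5 := Hmin (lift r0 r) isT.
have H6 := Hj0 (lift j0 c') (introT andP (conj H1 H2)).
apply: diff_ind H5 H3 H6 H4; exact H1.
Qed.

Lemma Aentry n Kt Kh (alpha beta : int) (Ct : 'M[int]_(Kt, n)) (Ch : 'M[int]_(Kh, n)) r c :
  ordinal_system_matrix alpha beta Ct Ch r c =
  match split c with
  | inl i => match split r with inl a => alpha * Ct a i | inr b => beta * Ch b i end
  | inr j => (r == j)%:R end.
Proof.
rewrite /ordinal_system_matrix !mxE.
case: (splitP r) => [a Ha|b Hb]; rewrite !mxE; case: (splitP c) => [i Hi|j Hj]; rewrite !mxE //.
- case: (splitP j) => [j1 Hj1|j2 Hj2]; rewrite !mxE //.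
  + by rewrite -[r == j]val_eqE /= Ha Hj1.
  + have -> : (r == j) = false by apply/negbTE; rewrite -val_eqE /= Ha Hj2; apply/eqP => E; move: (ltn_ord a); lia.
    done.
- case: (splitP j) => [j1 Hj1|j2 Hj2]; rewrite !mxE //.
  + have -> : (r == j) = false by apply/negbTE; rewrite -val_eqE /= Hb Hj1; apply/eqP => E; move: (ltn_ord j1); lia.
    done.
  + by rewrite -[r == j]val_eqE /= Hb Hj2 eqn_add2l.
Qed.

Theorem corollary1 (n Kt Kh : nat) (alpha beta : int)
  (ot : 'I_n -> 'I_Kt) (oh : 'I_n -> 'I_Kh) :
  in_m101 alpha -> in_m101 beta ->
  totally_unimodular
    (ordinal_system_matrix alpha beta (cost_matrix ot) (cost_matrix oh)).
Proof.
move=> Ha Hb k f g finj ginj d.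
pose pos r := if (f r < Kt)%N then (Kt.-1 - f r)%N else val (f r).
pose w r := if (f r < Kt)%N then alpha else beta.
pose lo c := match split (g c) with inl i => (Kt.-1 - ot i)%N | inr _ => 0%N end.
pose hi c := match split (g c) with inl i => (Kt + oh i)%N | inr _ => 0%N end.
have H : in_m101 d.
  apply: (@key k _ pos w lo hi) => [r|c].
    by rewrite /w; case: ifP.
  have HM : forall r, mxsub f g (ordinal_system_matrix alpha beta (cost_matrix ot) (cost_matrix oh)) r c
     = match split (g c) with
  | inl i => match split (f r) with inl a => alpha * (cost_matrix ot) a i | inr b => beta * (cost_matrix oh) b i end
  | inr j => (f r == j)%:R end.
    by move=> r; rewrite mxE Aentry.
  rewrite /lo /hi; move: HM; case: (splitP (g c)) => [i _|j _] HM.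
    right => r; rewrite HM /w /pos.
    case: (splitP (f r)) => [a Ha'|b Hb']; rewrite !mxE.
      congr (_ * _); rewrite Ha'.
      have := ltn_ord a; have := ltn_ord (ot i); have := ltn_ord (oh i) => *.
      have -> : (Kt.-1 - ot i <= Kt.-1 - a <= Kt + oh i)%N = (a <= ot i)%N.
        by apply/idP/idP => [/andP [H1 H2]|H]; [lia | apply/andP; split; lia].
      by case: ifP.
    congr (_ * _); have -> : \val (f r) = (Kt + b)%N by exact: Hb'.
    have := ltn_ord b; have := ltn_ord (ot i); have := ltn_ord (oh i) => *.
    have -> : (Kt.-1 - ot i <= Kt + b <= Kt + oh i)%N = (b <= oh i)%N.
      by apply/idP/idP => [/andP [H1 H2]|H]; [lia | apply/andP; split; lia].
    by case: ifP.
  left; exists (fun r => f r == j); split => [r|r r' /eqP Er /eqP Er'].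
    exact: HM.
  by apply: finj; rewrite Er Er'.
by case: H => [->|[->|->]]; auto.
Qed.
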